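(* Let $\alpha,\beta\in\mathbb{R}\setminus\mathbb{Q}$, $0<\gamma<1$, $0<\varepsilon<1/2$ and $T>e$, and assume \[ \frac{1}{T^2}m_{\mathbb{R}^2}\left(\left\{(s,t)\in[0,T]^2\ \middle|\ a_{s,t}\tau_{\alpha,\beta}\Gamma\in X_\varepsilon\right\}\right)\geq\gamma, \] where $m_{\mathbb{R}^2}$ is Lebesgue measure on $\mathbb{R}^2$. Then \[ \frac{(\log T)^2}{T^2}\left|\left\{n\in\mathbb{N}\ \middle|\ n<e^{2T},\ n\langle n\alpha\rangle\langle n\beta\rangle\leq\varepsilon^3\right\}\right|\geq\frac{\gamma}{18}. \]
   Context: $\Gamma=\mathrm{SL}(3,\mathbb{Z})$, $X=\mathrm{SL}(3,\mathbb{R})/\Gamma$, where $g\Gamma\in X$ is identified with the unimodular lattice $g\mathbb{Z}^3\subset\mathbb{R}^3$; $\mathrm{SL}(3,\mathbb{R})$ acts on $X$ by left multiplication. For $s,t\in\mathbb{R}$, $a_{s,t}=\mathrm{diag}(e^{-s-t},e^s,e^t)$. $\tau_{\alpha,\beta}$ is the lower triangular unipotent matrix with first column $(1,\alpha,\beta)^t$ and other columns $(0,1,0)^t,(0,0,1)^t$. For $0<\varepsilon<1/2$, $X_\varepsilon=\{x\in X : x\cap \overline{B_\varepsilon}\neq\{0\}\}$, where $B_\varepsilon=\{v\in\mathbb{R}^3: \|v\|_\infty<\varepsilon\}$ and $\|v\|_\infty$ is the maximum of the absolute values of the coordinates. $\langle x\rangle$ denotes the distance from $x\in\mathbb{R}$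 to the nearest integer. *)

(* Defs.v *)
From HB Require Import structures.
From mathcomp Require Import all_boot all_order all_algebra.
From mathcomp Require Import all_classical all_reals all_analysis.
Set Implicit Arguments. Unset Strict Implicit. Unset Printing Implicit Defensive.
Import Order.TTheory GRing.Theory Num.Theory.
Local Open Scope ring_scope.

Section Defs.
Variable R : realType.

Definition a_st (s t : R) : 'M[R]_3 :=
  \matrix_(i < 3, j < 3)
    (if i == j then
       (if val i == 0%N then expR (- s - t)
        else if val i == 1%N then expR s else expR t)
     else 0).

Definition tau (al be : R) : 'M[R]_3 :=
  \matrix_(i < 3, j < 3)
    (if i == j then 1
     else if val j == 0%N then (if val i == 1%N then al else be)
     else 0).

Definition supnorm3 (v : 'cV[R]_3) : R := \big[Num.max/0]_(i < 3) `|v i ord0|.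

(* g Gamma in X_eps : the lattice g Z^3 meets the closed sup-norm ball of
   radius eps in a nonzero vector *)
Definition in_X_eps (eps : R) (g : 'M[R]_3) : Prop :=
  exists z : 'cV[int]_3, z != 0 /\
    supnorm3 (g *m map_mx (fun k : int => k%:~R) z) <= eps.

Definition dist_int (x : R) : R :=
  Num.min (x - (Num.floor x)%:~R) ((Num.floor x + 1)%:~R - x).

Definition count_good (al be eps T : R) : nat :=
  \sum_(1 <= n < (Num.truncn (expR (2 * T))).+1
        | (n%:R < expR (2 * T)) &&
          (n%:R * dist_int (n%:R * al) * dist_int (n%:R * be) <= eps ^+ 3)) 1%N.

End Defs.

(* Main.v *)
Require Import Defs.
From HB Require Import structures.
From mathcomp Require Import all_boot all_order all_algebra.
From mathcomp Require Import all_classical all_reals all_analysis.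
From mathcomp Require Import ring lra zify measurable_realfun.
Import Order.TTheory GRing.Theory Num.Theory.
Import numFieldNormedType.Exports.
Set Implicit Arguments. Unset Strict Implicit.
Local Open Scope classical_set_scope.
Local Open Scope ring_scope.

Section Alg.
Variable R : realType.

Lemma dist_int_le (x : R) (k : int) : dist_int x <= `|x - k%:~R|.
Proof.
rewrite /dist_int.
have h1 := floor_le x.
have h2 : x < (Num.floor x + 1)%:~R by rewrite -floor_lt_int ltrDl.
have [hk|hk] := lerP k (Num.floor x).
  have : k%:~R <= (Num.floor x)%:~R :> R by rewrite ler_int.
  move=> hk'; rewrite ger0_norm ?subr_ge0; last lra.
  rewrite ge_min; apply/orP; left; lra.
have : (Num.floor x + 1)%:~R <= k%:~R :> R by rewrite ler_int; lia.
move=> hk'; rewrite ler0_norm ?subr_le0; last lra.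
rewrite ge_min; apply/orP; right; lra.
Qed.


Lemma dist_int_eq (x : R) : exists k : int, dist_int x = `|x - k%:~R|.
Proof.
rewrite /dist_int.
have h1 := floor_le x.
have h2 : x < (Num.floor x + 1)%:~R by rewrite -floor_lt_int ltrDl.
have [hm|hm] := leP (x - (Num.floor x)%:~R) ((Num.floor x + 1)%:~R - x).
  by exists (Num.floor x); rewrite ger0_norm // subr_ge0.
by exists (Num.floor x + 1); rewrite ler0_norm ?subr_le0 ?opprB //; apply: ltW.
Qed.

Lemma dist_int_ge0 (x : R) : 0 <= dist_int x.
Proof. by have [k ->] := dist_int_eq x. Qed.

Lemma dist_int_mul (k : nat) (x : R) : dist_int (k%:R * x) <= k%:R * dist_int x.
Proof.
have [j ->] := dist_int_eq x.
apply: le_trans (dist_int_le _ (j * k%:Z)) _.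
have -> : ((j * k%:Z)%:~R : R) = k%:R * j%:~R by rewrite intrM mulrC.
by rewrite -mulrBr normrM ger0_norm.
Qed.

Lemma dist_int_gt0 (al : R) (n : nat) : (forall q : rat, al <> ratr q) -> (0 < n)%N ->
  0 < dist_int (n%:R * al).
Proof.
move=> hal hn; rewrite lt_neqAle dist_int_ge0 andbT; apply/eqP => h.
have [k hk] := dist_int_eq (n%:R * al).
move: hk; rewrite -h => /esym/eqP; rewrite normr_eq0 subr_eq0 => /eqP e.
apply: (hal (k%:~R / n%:R)).
rewrite rmorphM /= fmorphV /= rmorph_int rmorph_nat -e mulrC mulrA mulVf ?mul1r //.
by rewrite pnatr_eq0 -lt0n.
Qed.

Definition i1 : 'I_3 := @Ordinal 3 1 isT.
Definition i2 : 'I_3 := @Ordinal 3 2 isT.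

Lemma entries (al be s t : R) (z : 'cV[int]_3) :
  let v := a_st s t *m tau al be *m map_mx (fun k : int => k%:~R) z in
  [/\ v ord0 ord0 = expR (- s - t) * (z ord0 ord0)%:~R,
      v i1 ord0 = expR s * (al * (z ord0 ord0)%:~R + (z i1 ord0)%:~R) &
      v i2 ord0 = expR t * (be * (z ord0 ord0)%:~R + (z i2 ord0)%:~R)].
Proof.
rewrite /= /a_st /tau.
have e1 : lift ord0 ord0 = i1 :> 'I_3 by apply: val_inj.
have e2 : lift ord0 (lift ord0 ord0) = i2 :> 'I_3 by apply: val_inj.
split; rewrite !mxE !big_ord_recl !big_ord0 /= !mxE !big_ord_recl !big_ord0 /= !mxE /= e1 e2; ring.
Qed.

Lemma supnorm3_le (v : 'cV[R]_3) e : 0 <= e ->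
  (supnorm3 v <= e) <-> [/\ `|v ord0 ord0| <= e, `|v i1 ord0| <= e & `|v i2 ord0| <= e].
Proof.
move=> e0; rewrite /supnorm3 !big_ord_recl big_ord0 /= !ge_max e0 andbT.
have e1 : lift ord0 ord0 = i1 :> 'I_3 by apply: val_inj.
have e2 : lift ord0 (lift ord0 ord0) = i2 :> 'I_3 by apply: val_inj.
rewrite e1 e2; split; first by case/and3P.
by case=> -> -> ->.
Qed.

Lemma inX_iff (al be eps s t : R) : 0 <= eps ->
  in_X_eps eps (a_st s t *m tau al be) <->
  exists z0 z1 z2 : int, [/\ ~~ [&& z0 == 0, z1 == 0 & z2 == 0],
   `|expR (- s - t) * z0%:~R| <= eps, `|expR s * (al * z0%:~R + z1%:~R)| <= eps &
   `|expR t * (be * z0%:~R + z2%:~R)| <= eps].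
Proof.
move=> e0; split.
  case=> z [zn0]; rewrite supnorm3_le //; case: (entries al be s t z) => -> -> ->.
  case=> h0 h1 h2; exists (z ord0 ord0), (z i1 ord0), (z i2 ord0); split => //.
  apply: contra zn0 => /and3P[/eqP a /eqP b /eqP c]; apply/eqP/matrixP => i j.
  rewrite (ord1 j) mxE; case: i => -[|[|[|//]]] hi.
  - by rewrite -a; congr (z _ _); apply: val_inj.
  - by rewrite -b; congr (z _ _); apply: val_inj.
  - by rewrite -c; congr (z _ _); apply: val_inj.
case=> z0 [z1 [z2 [zn0 h0 h1 h2]]].
pose z : 'cV[int]_3 := \matrix_(i, j) (if val i == 0%N then z0 else if val i == 1%N then z1 else z2).
exists z; split.
  apply: contra zn0 => /eqP zE.
  have := congr1 (fun m : 'cV[int]_3 => m ord0 ord0) zE; have := congr1 (fun m : 'cV[int]_3 => m i1 ord0) zE.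
  have := congr1 (fun m : 'cV[int]_3 => m i2 ord0) zE.
  by rewrite /z !mxE /= => -> -> ->; rewrite !eqxx.
rewrite supnorm3_le //; case: (entries al be s t z) => -> -> ->.
by rewrite /z !mxE /=.
Qed.
End Alg.

Section Geo.
Variables (R : realType) (al be eps T : R).

Definition Trib (n : nat) (p : R * R) : bool :=
  [&& 0 <= p.1, p.1 <= T, 0 <= p.2, p.2 <= T,
      n%:R * expR (- p.1 - p.2) <= eps,
      expR p.1 * dist_int (n%:R * al) <= eps &
      expR p.2 * dist_int (n%:R * be) <= eps].

Definition Tri n : set (R * R) := [set p | Trib n p].

Lemma mTrib n : measurable_fun setT (Trib n).
Proof.
have mf := @measurable_fst _ _ R R.
have ms := @measurable_snd _ _ R R.
have mc (c : R) : measurable_fun setT (fun _ : R * R => c) by exact: measurable_cst.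
rewrite /Trib.
repeat apply: measurable_and.
- exact: measurable_fun_ler.
- exact: measurable_fun_ler.
- exact: measurable_fun_ler.
- exact: measurable_fun_ler.
- apply: measurable_fun_ler => //; apply: measurable_funM => //.
  apply: measurableT_comp; first exact: measurable_expR.
  apply: measurable_funB => //; exact: measurableT_comp.
- apply: measurable_fun_ler => //; apply: measurable_funM => //.
  exact: measurableT_comp.
- apply: measurable_fun_ler => //; apply: measurable_funM => //.
  exact: measurableT_comp.
Qed.

Lemma mTri n : measurable (Tri n).
Proof.
rewrite (_ : Tri n = setT `&` Trib n @^-1` [set true]).
  by apply: mTrib => //.
by rewrite setTI /Tri; apply/seteqP; split => p /=.
Qed.


Lemma expA s (d : R) : 0 < eps -> 0 < d -> (expR s * d <= eps) = (s <= ln eps - ln d).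
Proof.
move=> e0 d0; rewrite -[in RHS]ler_expR expRD expRN !lnK ?posrE //.
by rewrite ler_pdivlMr.
Qed.

Lemma expC s t (n : nat) : 0 < eps -> (0 < n)%N ->
  (n%:R * expR (- s - t) <= eps) = (ln n%:R - ln eps <= s + t).
Proof.
move=> e0 n0; rewrite -[in RHS]ler_expR expRD expRN !lnK ?posrE ?ltr0n //.
by rewrite -opprD expRN ler_pdivrMr ?expR_gt0 // ler_pdivrMr // mulrC.

Qed.
Lemma int_lin (c a : R) : c < a ->
  (\int[@lebesgue_measure R]_(x in `[c, a]) (x - c)%:E = ((a - c)^+2 / 2)%:E)%E.
Proof.
move=> ca.
pose F : R -> R := fun x => (x - c) * (x - c) / 2.
have dF : forall x, derivable F x 1.
  move=> x; rewrite /F; apply: derivableM => //; apply: derivableM => //.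
have cF (x : R) : {for x, continuous F}.
  apply: differentiable_continuous; exact/derivable1_diffP.
rewrite (@continuous_FTC2 _ _ F).
- by rewrite /F subrr mul0r mul0r sube0 expr2.
- by [].
- apply: continuous_in_subspaceT => x _.
  by apply: cvgD; [exact: cvg_id|exact: cvg_cst].
- split.
  + by move=> x _; exact: dF.
  + exact: cvg_at_right_filter (cF c).
  + exact: cvg_at_left_filter (cF a).
- move=> x _; rewrite /F derive1E.
  rewrite derive_val !scaler0 add0r subr0; rewrite /GRing.scale /=; field; rewrite ?pnatr_eq0 //.
Qed.


Lemma Tri_measure (n : nat) : (0 < n)%N -> 0 < eps -> 0 <= T ->
  0 < dist_int (n%:R * al) -> 0 < dist_int (n%:R * be) ->
  (((@lebesgue_measure R) \x (@lebesgue_measure R)) (Tri n) <=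
  ((Num.max 0 (Num.min T (ln eps - ln (dist_int (n%:R * al))) +
               Num.min T (ln eps - ln (dist_int (n%:R * be))) -
               (ln n%:R - ln eps))) ^+ 2 / 2)%:E)%E.
Proof.
move=> n0 e0 T0 d0 f0.
set A := ln eps - ln _; set B := ln eps - ln _; set C := ln n%:R - ln eps.
set a' := Num.min T A; set b' := Num.min T B.
set c0 := C - b'.
pose g := (fun s : R => (s - c0)%:E) \_ `[c0, a'].
have g0 s : (0 <= g s)%E.
  rewrite /g patchE; case: ifP => // /set_mem; rewrite /= in_itv /= => /andP[h _].
  by rewrite lee_fin subr_ge0.
have mg : measurable_fun setT g.
  apply/(measurable_restrictT _ _).1 => //.
  apply/measurable_EFinP; apply: measurable_funB => //; exact: measurable_cst.
have hx s : ((@lebesgue_measure R) (xsection (Tri n) s) <= g s)%E.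
  case hs: [&& 0 <= s, s <= T & expR s * dist_int (n%:R * al) <= eps]; last first.
    rewrite (_ : xsection _ _ = set0) ?measure0 //.
    apply/seteqP; split => // t /xsectionP /and5P[h1 h2 _ _ /and3P[_ h3 _]].
    by move: hs; rewrite h1 h2 h3.
  move/and3P: hs => [s0 sT sA]; rewrite expA // -/A in sA.
  have sub : xsection (Tri n) s `<=` `[C - s, b'].
    move=> t /xsectionP /and5P[_ _ t0 tT /and3P[hC _ hB]].
    rewrite expA // -/B in hB; rewrite expC // -/C in hC.
    rewrite /= in t0 tT hB hC.
    change (t \in `[C - s, b']); rewrite in_itv /= le_min tT hB !andbT; lra.
  have mx : xsection (Tri n) s \in measurable.
    by rewrite inE; apply: measurable_xsection; exact: mTri.
  have mi : `[C - s, b']%classic \in measurable by rewrite inE.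
  have hle : ((@lebesgue_measure R) (xsection (Tri n) s) <=
              (@lebesgue_measure R) `[(C - s)%R, b']%classic)%E.
    exact: (@le_measure _ _ _ (@lebesgue_measure R) _ _ mx mi sub).
  apply: le_trans hle _.
  rewrite lebesgue_measure_itv /=.
  case: ifP => _; last exact: g0.
  have [hc|hc] := leP c0 s.
    rewrite /g patchE mem_set; last by rewrite /= in_itv /= hc le_min sT sA.
    by rewrite -EFinD lee_fin /c0 (_ : s - (C - b') = b' - (C - s)) //; ring.
  apply: le_trans (g0 s); rewrite -EFinD lee_fin; rewrite /c0 in hc; lra.
rewrite /product_measure1.
apply: (le_trans (@ge0_le_integral _ _ _ (@lebesgue_measure R) setT measurableT _ g _ _ _ _)).
- by move=> x _; exact: measure_ge0.
- exact: (@measurable_fun_xsection _ _ _ _ _ (@lebesgue_measure R) _ (mTri n)).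
- exact: mg.
- by move=> x _; exact: hx.
rewrite -integral_mkcond.
have [ca|ac] := ltP c0 a'.
  rewrite int_lin // lee_fin; have -> : a' + b' - C = a' - c0 by rewrite /c0; ring.
  by rewrite max_r // subr_ge0 ltW.
rewrite integral0_eq.
  by rewrite lee_fin; apply: divr_ge0 => //; exact: sqr_ge0.
move=> x; rewrite /= in_itv /= => /andP[h1 h2].
have -> : x = c0 by apply/eqP; rewrite eq_le h1 (le_trans h2 ac).
by rewrite subrr.
Qed.
End Geo.

Section Main.
Variable R : realType.

Lemma int_small {z : int} {y eps : R} : 1 <= y -> eps < 1 -> `|y * z%:~R| <= eps -> z = 0.
Proof.
move=> y1 e1 h.
have : `|z%:~R : R| < 1.
  apply: le_lt_trans (le_trans _ h) e1.
  rewrite normrM ger0_norm; last lra.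
  by rewrite ler_peMl // normr_ge0.
rewrite -intr_norm -[1]/((1 : int)%:~R) ltr_int => hz.
lia.
Qed.

Lemma S_sub (al be eps T s t : R) : 0 < eps < 2^-1 -> 0 <= s <= T -> 0 <= t <= T ->
  in_X_eps eps (a_st s t *m tau al be) ->
  exists n : nat, [/\ (0 < n)%N, n%:R < expR (2 * T),
     n%:R * dist_int (n%:R * al) * dist_int (n%:R * be) <= eps ^+ 3 &
     @Trib R al be eps T n (s, t)].
Proof.
move=> /andP[e0 e1] /andP[s0 sT] /andP[t0 tT].
rewrite inX_iff; last exact: ltW.
move=> [z0 [z1 [z2 [nz h0 h1 h2]]]].
have ys : 1 <= expR s by rewrite -expR0 ler_expR.
have yt : 1 <= expR t by rewrite -expR0 ler_expR.
have e1' : eps < 1 by apply: lt_le_trans e1 _; rewrite invf_le1 ?ler1n.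
have [z00|z0n] := eqVneq z0 0.
  rewrite z00 mulr0z mulr0 add0r in h1; rewrite z00 mulr0z mulr0 add0r in h2.
  have := int_small ys e1' h1; have := int_small yt e1' h2.
  by move=> a b; move: nz; rewrite z00 a b !eqxx.
set n := `|z0|%N.
have n0 : (0 < n)%N by rewrite absz_gt0.
have nE : n%:R = `|z0%:~R : R| by rewrite natr_absz intr_norm.
have hd : forall (x : R) (zz : int), dist_int (n%:R * x) <= `|x * z0%:~R + zz%:~R|.
  move=> x zz; rewrite nE.
  have [zp|zn] := ler0P (z0%:~R : R).
    apply: le_trans (dist_int_le _ zz) _.
    by rewrite (_ : - z0%:~R * x - zz%:~R = - (x * z0%:~R + zz%:~R)) ?normrN //; ring.
  apply: le_trans (dist_int_le _ (- zz)) _.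
  by rewrite rmorphN /= opprK mulrC.
have X0 : 0 < expR (- s - t) by exact: expR_gt0.
have Y0 : 0 < expR s by exact: expR_gt0.
have Z0 : 0 < expR t by exact: expR_gt0.
have XYZ : expR (- s - t) * expR s * expR t = 1.
  by rewrite -!expRD (_ : - s - t + s + t = 0) ?expR0 //; ring.
have c0 : n%:R * expR (- s - t) <= eps.
  by move: h0; rewrite normrM ger0_norm ?expR_ge0 // -nE mulrC.
have c1 : expR s * dist_int (n%:R * al) <= eps.
  apply: le_trans h1; rewrite normrM (ger0_norm (expR_ge0 _)).
  by rewrite ler_pM2l // hd.
have c2 : expR t * dist_int (n%:R * be) <= eps.
  apply: le_trans h2; rewrite normrM (ger0_norm (expR_ge0 _)).
  by rewrite ler_pM2l // hd.
have d0 := dist_int_ge0 (n%:R * al).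
have f0 := dist_int_ge0 (n%:R * be).
exists n; split => //.
- have ST : expR (s + t) <= expR (2 * T) by rewrite ler_expR; lra.
  have : n%:R <= eps * expR (s + t).
    move: c0; rewrite -ler_pdivlMr // => /le_trans; apply.
    have -> : eps / expR (- s - t) = eps * expR (s + t).
      by rewrite -expRN; congr (_ * expR _); ring.
    by [].
  move=> h; apply: le_lt_trans h _.
  have : 0 < expR (s + t) by exact: expR_gt0.
  nra.
- have -> : n%:R * dist_int (n%:R * al) * dist_int (n%:R * be) =
     (n%:R * expR (- s - t)) * (expR s * dist_int (n%:R * al)) * (expR t * dist_int (n%:R * be)).
    rewrite -[LHS]mulr1 -XYZ; ring.
  rewrite (_ : eps ^+ 3 = eps * eps * eps); last by ring.
  rewrite ler_pM // ?ler_pM //; by rewrite ?mulr_ge0 ?expR_ge0 ?ler0n.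
- by rewrite /Trib /= s0 sT t0 tT c0 c1 c2.
Qed.


Lemma Tri_sub_S (al be eps T : R) (n : nat) (s t : R) : 0 < eps -> (0 < n)%N ->
  @Trib R al be eps T n (s, t) ->
  [/\ 0 <= s <= T, 0 <= t <= T & in_X_eps eps (a_st s t *m tau al be)].
Proof.
move=> e0 n0 /and5P[s0 sT t0 tT /and3P[c0 c1 c2]]; rewrite /= in s0 sT t0 tT c0 c1 c2.
rewrite s0 sT t0 tT; split => //.
rewrite inX_iff; last exact: ltW.
have [k1 hk1] := dist_int_eq (n%:R * al).
have [k2 hk2] := dist_int_eq (n%:R * be).
exists n%:Z, (- k1), (- k2); split.
- by rewrite negb_and -lt0n n0.
- by rewrite normrM ger0_norm ?expR_ge0 // normr_nat mulrC.
- by rewrite normrM ger0_norm ?expR_ge0 // rmorphN /= (_ : (n%:Z)%:~R = n%:R :> R) // (mulrC al) -hk1.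
- by rewrite normrM ger0_norm ?expR_ge0 // rmorphN /= (_ : (n%:Z)%:~R = n%:R :> R) // (mulrC be) -hk2.
Qed.
End Main.

Lemma expln (R : realType) (x : R) : 0 < x -> expR (ln x) = x.
Proof. by move=> x0; rewrite lnK ?posrE. Qed.

Theorem theorem3p1 (R : realType) (al be gam eps T : R) :
  (forall q : rat, al <> ratr q) ->
  (forall q : rat, be <> ratr q) ->
  0 < gam < 1 ->
  0 < eps < 2^-1 ->
  expR 1 < T ->
  ((gam * T ^+ 2)%:E <=
     ((@lebesgue_measure R) \x (@lebesgue_measure R))%E
       [set st : R * R | [/\ 0 <= st.1 <= T, 0 <= st.2 <= T &
                             in_X_eps eps (a_st st.1 st.2 *m tau al be)]%R])%E ->
  gam / 18 <= (ln T) ^+ 2 / T ^+ 2 * (count_good al be eps T)%:R.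
Proof.
move=> hal hbe /andP[g0 g1] /andP[e0 e1] hT hmeas.
have e2 : 2 <= expR (1 : R) by have := expR_ge1Dx (1 : R); rewrite (_ : 1 + 1 = 2 :> R) //.
have T2 : 2 < T by lra.
have T0 : 0 < T by lra.
have lT : 1 < ln T by rewrite -ltr_expR expln.
set N := Num.truncn (expR (2 * T)).
pose P := fun n : nat => (n%:R < expR (2 * T)) &&
  (n%:R * dist_int (n%:R * al) * dist_int (n%:R * be) <= eps ^+ 3).
set L := [seq n <- index_iota 1 N.+1 | P n].
have cE : count_good al be eps T = size L by rewrite /count_good sum1_count size_filter.
have memL n : (n \in L) = [&& (0 < n)%N, (n <= N)%N & P n].
  by rewrite mem_filter mem_index_iota ltnS andbC andbA.
have PN n : P n -> (n <= N)%N.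
  by move=> /andP[h _]; rewrite truncn_ge_nat ?expR_ge0 // ltW.
rewrite cE.
pose M n := Num.min T (ln eps - ln (dist_int (n%:R * al))) +
            Num.min T (ln eps - ln (dist_int (n%:R * be))) - (ln n%:R - ln eps).
have [[n [nL big]] | small] := pselect (exists n, n \in L /\ 6 * ln T < M n).
  move: nL; rewrite memL => /and3P[n0 nN /andP[_ good]].
  have d0 := dist_int_gt0 hal n0.
  have f0 := dist_int_gt0 hbe n0.
  set d := dist_int (n%:R * al) in d0 good big.
  set f := dist_int (n%:R * be) in f0 good big.
  have n0' : (0 : R) < n%:R by rewrite ltr0n.
  have h1 : ln n%:R + ln d + ln f + 6%:R * ln T < 3%:R * ln eps.
    move: big; rewrite /M -/d -/f.
    have : Num.min T (ln eps - ln d) <= ln eps - ln d by rewrite ge_min lexx orbT.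
    have : Num.min T (ln eps - ln f) <= ln eps - ln f by rewrite ge_min lexx orbT.
    lra.
  have h2 : ln n%:R + 6%:R * ln T < 2 * T + ln eps.
    move: big; rewrite /M -/d -/f.
    have : Num.min T (ln eps - ln d) <= T by rewrite ge_min lexx.
    have : Num.min T (ln eps - ln f) <= T by rewrite ge_min lexx.
    lra.
  have T6 : expR (6%:R * ln T) = T ^+ 6 by rewrite expRM_natl expln.
  have k1 : n%:R * d * f * T ^+ 6 < eps ^+ 3.
    rewrite -ltr_expR in h1; move: h1; rewrite !expRD T6 expRM_natl !expln //.
  have k2 : n%:R * T ^+ 6 < expR (2 * T) * eps.
    rewrite -ltr_expR in h2; move: h2; rewrite !expRD T6 !expln //.
  set K := Num.truncn (T ^+ 2).
  have KT : K%:R <= T ^+ 2 by rewrite truncn_le exprn_ge0 // ltW.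
  have KT' : T ^+ 2 < K.+1%:R by exact: truncnS_gt.
  have Tle : T ^+ 2 <= T ^+ 6.
    have T4 : 1 <= T ^+ 4 by rewrite exprn_ege1 //; lra.
    have T20 : 0 <= T ^+ 2 by exact: exprn_ge0 (ltW T0).
    have -> : T ^+ 6 = T ^+ 2 * T ^+ 4 by ring.
    nra.
  have KL : (K <= size L)%N.
    rewrite -(size_iota 0 K) -(size_map (fun k => k.+1 * n)%N).
    apply: uniq_leq_size.
      rewrite map_inj_uniq ?iota_uniq // => a b /eqP; rewrite eqn_pmul2r // => /eqP [].
      done.
    move=> m /mapP[k]; rewrite mem_iota add0n => kK ->.
    have kR : k.+1%:R <= T ^+ 2 by apply: le_trans KT; rewrite ler_nat.
    have kR0 : (0 : R) < k.+1%:R by rewrite ltr0n.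
    have mlt : (k.+1 * n)%N%:R < expR (2 * T).
      rewrite natrM.
      have : k.+1%:R * n%:R <= T ^+ 6 * n%:R by rewrite ler_pM2r // (le_trans kR Tle).
      move=> h; apply: le_lt_trans h _; rewrite mulrC; apply: lt_le_trans k2 _.
      by rewrite ler_piMr ?expR_ge0 // ltW // (lt_trans e1) // invf_lt1 // ltr1n.
    have mP : P (k.+1 * n)%N.
      apply/andP; split => //.
      have ha : dist_int ((k.+1 * n)%N%:R * al) <= k.+1%:R * d.
        by rewrite natrM -mulrA; exact: dist_int_mul.
      have hb : dist_int ((k.+1 * n)%N%:R * be) <= k.+1%:R * f.
        by rewrite natrM -mulrA; exact: dist_int_mul.
      have ha0 := dist_int_ge0 ((k.+1 * n)%N%:R * al).
      have hb0 := dist_int_ge0 ((k.+1 * n)%N%:R * be).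
      apply: ltW; apply: le_lt_trans k1.
      apply: le_trans (_ : (k.+1 * n)%N%:R * (k.+1%:R * d) * (k.+1%:R * f) <= _).
        by rewrite ler_pM // ?mulr_ge0 ?ler0n // ler_pM2l // ltr0n muln_gt0 n0.
      rewrite natrM.
      have k3 : k.+1%:R ^+ 3 <= T ^+ 6 :> R.
        by rewrite (_ : 6%N = (2 * 3)%N) // exprM lerXn2r // ?nnegrE ?ler0n ?exprn_ge0 // ltW.
      have -> : k.+1%:R * n%:R * (k.+1%:R * d) * (k.+1%:R * f) = (k.+1%:R ^+ 3) * (n%:R * d * f).
        by ring.
      by rewrite [X in _ <= X]mulrC ler_pM2r // !mulr_gt0.
    by rewrite memL muln_gt0 n0 mP (PN _ mP).
  have cK : T ^+ 2 - 1 <= (size L)%:R.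
    have : (K.+1 <= (size L).+1)%N by [].
    rewrite -(ler_nat R) => h; move: (lt_le_trans KT' h); rewrite -natr1 => h'; lra.
  have lT2 : 1 <= ln T ^+ 2 by rewrite exprn_ege1 //; lra.
  have TT : 4 <= T ^+ 2 by rewrite expr2; nra.
  rewrite mulrAC ler_pdivlMr ?exprn_gt0 //.
  have sz0 : (0 : R) <= (size L)%:R by [].
  have : (size L)%:R <= ln T ^+ 2 * (size L)%:R by rewrite ler_peMl.
  have : gam / 18 * T ^+ 2 <= T ^+ 2 / 18.
    have : 0 < T ^+ 2 by exact: exprn_gt0.
    nra.
  lra.
have eb : 0 < eps < 2^-1 by rewrite e0 e1.
have small' : forall n, n \in L -> M n <= 6 * ln T.
  move=> n nL; rewrite leNgt; apply/negP => h; apply: small; by exists n.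
pose S := [set st : R * R | [/\ 0 <= st.1 <= T, 0 <= st.2 <= T &
                             in_X_eps eps (a_st st.1 st.2 *m tau al be)]].
pose F := fun k => @Tri R al be eps T (nth 0%N L k).
have nthL k : (k < size L)%N -> nth 0%N L k \in L by move=> kL; exact: mem_nth.
have SE : S = \big[setU/set0]_(k < size L) F k.
  rewrite -bigcup_mkord; apply/seteqP; split.
    move=> [s t] [hs ht hX].
    have [n [n0 nlt ngood hn]] := S_sub (eb) hs ht hX.
    have nL : n \in L by rewrite memL n0 /P nlt ngood (PN n) //= /P nlt ngood.
    exists (index n L); first by rewrite /= index_mem.
    by rewrite /F nth_index.
  move=> [s t] [k /= kL Fk].
  have := nthL k kL; rewrite memL => /and3P[k0 _ _].
  exact: Tri_sub_S e0 k0 Fk.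
have mS : measurable S by rewrite SE; apply: bigsetU_measurable => k _; exact: mTri.
have SF : S `<=` \big[setU/set0]_(k < size L) F k by rewrite SE.
have bnd : forall k, (k < size L)%N ->
    (((@lebesgue_measure R) \x (@lebesgue_measure R)) (F k) <= (18 * ln T ^+ 2)%:E)%E.
  move=> k kL; have := nthL k kL; set n := nth 0%N L k => nL.
  have := nL; rewrite memL => /and3P[n0 _ _].
  apply: le_trans (Tri_measure n0 e0 (ltW T0) (dist_int_gt0 hal n0) (dist_int_gt0 hbe n0)) _.
  rewrite lee_fin.
  have hM := small' n nL.
  have hm0 : 0 <= Num.max 0 (M n) by rewrite le_max lexx.
  have hm1 : Num.max 0 (M n) <= 6 * ln T by rewrite ge_max hM andbT; lra.
  rewrite -/(M n).
  nra.
have tot : ((gam * T ^+ 2)%:E <= ((size L)%:R * (18 * ln T ^+ 2))%:E)%E.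
  apply: le_trans hmeas _.
  apply: (le_trans (@content_subadditive _ _ _ ((@lebesgue_measure R) \x (@lebesgue_measure R))%E S F (size L) _ mS SF)).
    by move=> k _; exact: mTri.
  have := lee_sum (index_enum 'I_(size L)) (P := xpredT) (fun k _ => bnd k (ltn_ord k)).
  move/le_trans; apply.
  rewrite sumEFin lee_fin sumr_const.
  rewrite (_ : #|_| = size L); last by rewrite -[RHS](card_ord (size L)).
  by rewrite -[in X in X <= _](mulr_natl (18 * ln T ^+ 2)).
rewrite lee_fin in tot.
rewrite mulrAC ler_pdivlMr ?exprn_gt0 //.
lra.
Qed.
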